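(* Let $n\ge 2$, let $\mathcal{L}\subset\mathbb{R}^n$ be a tame lattice with Lagrangian basis $\{\mathbf{e}_1,\dots,\mathbf{e}_n\}$, $\mathbf{v}_1=\sum_i\mathbf{e}_i$, $a:=\langle\mathbf{e}_1,\mathbf{e}_1\rangle$, $h:=-\langle\mathbf{e}_1,\mathbf{e}_2\rangle$. Let $r,s$ be integers with $0\ne|r|<n$, $m=r+sn$, and suppose $$\frac{na-1}{n^2-1}\le\left(\frac{m}{r}\right)^2\le\frac{(na-1)(n+1)}{n-1}.$$ Then $$\frac{1}{2^n}\le\delta(\mathcal{L}_{\mathbf{v}_1}^{(r,s)})\le\frac{1}{2^{n/2}\sqrt{n+1}},$$ i.e. $\delta(\mathbb{Z}^n)\le\delta(\mathcal{L}_{\mathbf{v}_1}^{(r,s)})\le\delta(A_n)$. The lower bound is attained when $(m/r)^2=\frac{na-1}{n-1}$ and the upper bound is attained when $(m/r)^2=\frac{(na-1)(n+1)}{n-1}$.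
   Context: Tame lattice: a full-rank lattice $\mathcal{L}\subset\mathbb{R}^n$ with a basis $\{\mathbf{e}_1,\dots,\mathbf{e}_n\}$ (Lagrangian basis) and nonzero $\mathbf{v}_1\in\mathcal{L}\cap\mathcal{L}^*$ such that $\sum_i\mathbf{e}_i=\mathbf{v}_1$, $\langle\mathbf{e}_i,\mathbf{v}_1\rangle=1$, $\langle\mathbf{e}_i,\mathbf{e}_i\rangle=a$, $\langle\mathbf{e}_i,\mathbf{e}_j\rangle=-h$ ($i\ne j$); then $a-h(n-1)=1$. $\mathcal{L}^{(r,s)}_{\mathbf{v}_1}$ is the image of $\mathcal{L}$ under $\mathbf{x}\mapsto r\mathbf{x}+s\langle\mathbf{x},\mathbf{v}_1\rangle\mathbf{v}_1$. Center density: $\delta(\Lambda)=\lambda_1(\Lambda)^n/(2^n\operatorname{vol}(\Lambda))$. $A_n=\{\mathbf{x}\in\mathbb{Z}^{n+1}:\sum_i x_i=0\}$, a rank-$n$ lattice with $\delta(A_n)=2^{-n/2}(n+1)^{-1/2}$; $\delta(\mathbb{Z}^n)=2^{-n}$. *)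

(* Defs.v *)
From HB Require Import structures.
From mathcomp Require Import all_boot all_order all_algebra.
From mathcomp Require Import classical_sets reals.
Set Implicit Arguments. Unset Strict Implicit. Unset Printing Implicit Defensive.
Import Order.TTheory GRing.Theory Num.Theory.
Local Open Scope ring_scope.
Local Open Scope classical_set_scope.

Section Lattices.
Variables (R : realType) (n : nat).

(* Vectors of R^n are row vectors 'rV[R]_n; a basis is given by the rows of
   a matrix B : 'M[R]_n. *)
Definition dotv (x y : 'rV[R]_n) : R := \sum_(i < n) x 0 i * y 0 i.
Definition norm2 (x : 'rV[R]_n) : R := Num.sqrt (dotv x x).

Definition lattice (B : 'M[R]_n) : set 'rV[R]_n :=
  [set x | exists z : 'I_n -> int, x = \sum_(i < n) (z i)%:~R *: row i B].

Definition dual (L : set 'rV[R]_n) : set 'rV[R]_n :=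
  [set y | forall x, L x -> exists k : int, dotv x y = k%:~R].

Definition lambda1 (B : 'M[R]_n) : R :=
  inf [set norm2 x | x in lattice B `\ 0].

Definition covol (B : 'M[R]_n) : R := `|\det B|.

Definition center_density (B : 'M[R]_n) : R :=
  lambda1 B ^+ n / (2 ^+ n * covol B).

Definition vsum (E : 'M[R]_n) : 'rV[R]_n := \sum_(i < n) row i E.

Definition tame_basis (E : 'M[R]_n) (a h : R) : Prop :=
  [/\ E \in unitmx /\ vsum E != 0,
      (lattice E (vsum E) /\ dual (lattice E) (vsum E)),
      (forall i : 'I_n, dotv (row i E) (vsum E) = 1),
      (forall i : 'I_n, dotv (row i E) (row i E) = a) &
      (forall i j : 'I_n, i != j -> dotv (row i E) (row j E) = - h)].

(* The linear map x |-> r x + s <x,v1> v1, acting on row vectors by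
   right multiplication. *)
Definition transf (r s : int) (v1 : 'rV[R]_n) : 'M[R]_n :=
  (r%:~R)%:M + (s%:~R) *: (v1^T *m v1).

(* A basis of L^{(r,s)}_{v1}: the images of the basis vectors of L. *)
Definition image_basis (E : 'M[R]_n) (r s : int) : 'M[R]_n :=
  E *m transf r s (vsum E).

End Lattices.

(* Main.v *)
Require Import Defs.
From HB Require Import structures.
From mathcomp Require Import all_boot all_order all_algebra.
From mathcomp Require Import classical_sets reals.
From mathcomp Require Import ring lra zify.
Import Order.TTheory GRing.Theory Num.Theory.
Local Open Scope ring_scope.

Lemma det_rank1 (R : fieldType) (n : nat) (u : 'cV[R]_n) (w : 'rV[R]_n) :
  \det (1%:M + u *m w) = 1 + (w *m u) 0 0.
Proof.
pose M := block_mx (1%:M : 'M[R]_n) (- u) w (1%:M : 'M[R]_1).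
have e1 : M = block_mx 1%:M 0 w 1%:M *m block_mx 1%:M (- u) 0 (1%:M + w *m u).
  rewrite mulmx_block; congr block_mx; rewrite ?mul1mx ?mul0mx ?mulmx0 ?mulmx1 ?addr0 ?add0r //.
  by rewrite mulmxN addrCA addNr addr0.
have e2 : M = block_mx (1%:M + u *m w) (- u) 0 1%:M *m block_mx 1%:M 0 w 1%:M.
  rewrite mulmx_block; congr block_mx; rewrite ?mul1mx ?mul0mx ?mulmx0 ?mulmx1 ?addr0 ?add0r //.
  by rewrite mulNmx addrK.
have := e2; rewrite e1 => /(congr1 determinant).
rewrite !det_mulmx ?det_lblock ?det_ublock ?det_lblock ?det_ublock !det1 ?mul1r ?mulr1.
by move=> <-; rewrite det_mx11 !mxE eqxx /=.
Qed.

Lemma dotvC {R : realType} {n : nat} (x y : 'rV[R]_n) : dotv x y = dotv y x.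
Proof. by rewrite /dotv; apply: eq_bigr => i _; rewrite mulrC. Qed.

Lemma dotv_sumsum {R : realType} {n : nat} (I J : finType) (f : I -> R) (g : J -> R)
   (X : I -> 'rV[R]_n) (Y : J -> 'rV[R]_n) :
  dotv (\sum_i f i *: X i) (\sum_j g j *: Y j) =
  \sum_i \sum_j f i * g j * dotv (X i) (Y j).
Proof.
rewrite /dotv.
under eq_bigr do rewrite !summxE big_distrl /=.
rewrite exchange_big /=; apply: eq_bigr => i _.
under eq_bigr do rewrite big_distrr /=.
rewrite exchange_big /=; apply: eq_bigr => j _.
rewrite big_distrr /=; apply: eq_bigr => k _.
by rewrite !mxE; ring.
Qed.

Lemma dotvDl {R : realType} {n : nat} (x y z : 'rV[R]_n) : dotv (x + y) z = dotv x z + dotv y z.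
Proof. by rewrite /dotv -big_split; apply: eq_bigr => i _; rewrite !mxE mulrDl. Qed.

Lemma dotvZl {R : realType} {n : nat} (c : R) (x z : 'rV[R]_n) : dotv (c *: x) z = c * dotv x z.
Proof. by rewrite /dotv big_distrr; apply: eq_bigr => i _; rewrite !mxE -mulrA. Qed.

Lemma dotvDr {R : realType} {n : nat} (x y z : 'rV[R]_n) : dotv z (x + y) = dotv z x + dotv z y.
Proof. by rewrite !(dotvC z) dotvDl. Qed.

Lemma dotvZr {R : realType} {n : nat} (c : R) (x z : 'rV[R]_n) : dotv z (c *: x) = c * dotv z x.
Proof. by rewrite !(dotvC z) dotvZl. Qed.

Lemma dotv_suml {R : realType} {n : nat} (I : finType) (X : I -> 'rV[R]_n) z :
  dotv (\sum_i X i) z = \sum_i dotv (X i) z.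
Proof.
rewrite /dotv exchange_big /=; apply: eq_bigr => k _.
by rewrite summxE big_distrl.
Qed.

Lemma dotv_ge0 {R : realType} {n : nat} (x : 'rV[R]_n) : 0 <= dotv x x.
Proof. by rewrite /dotv; apply: sumr_ge0 => i _; rewrite -expr2 sqr_ge0. Qed.

Lemma dotv_gt0 {R : realType} {n : nat} (x : 'rV[R]_n) : x != 0 -> 0 < dotv x x.
Proof.
move=> xn0; rewrite lt_neqAle dotv_ge0 andbT.
apply: contra xn0 => /eqP H; apply/eqP/rowP => k; rewrite mxE.
have: \sum_(i < n) x 0 i * x 0 i == 0 by rewrite -[X in X == _]/(dotv x x) H.
rewrite psumr_eq0 => [/allP /(_ k (mem_index_enum _)) /implyP /(_ isT)|i _].
  by rewrite mulf_eq0 orbb => /eqP.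
by rewrite -expr2 sqr_ge0.
Qed.

Lemma gram_tame {R : realType} {n : nat} (E : 'M[R]_n) (a h : R) :
  tame_basis E a h ->
  forall i j, dotv (row i E) (row j E) = (a + h) * (i == j)%:R - h.
Proof.
case=> _ _ _ Ha Hh i j; case: eqVneq => [<-|/Hh ->]; first by rewrite Ha mulr1 addrK.
by rewrite mulr0 sub0r.
Qed.

Lemma sum_delta {R : realType} {n : nat} (i : 'I_n) :
  \sum_(j < n) ((i == j)%:R : R) = 1.
Proof.
rewrite (bigD1 i) //= eqxx big1 ?addr0 // => j; by rewrite eq_sym => /negbTE ->.
Qed.

Lemma tame_facts {R : realType} {n : nat} (E : 'M[R]_n) (a h : R) :
  (2 <= n)%N -> tame_basis E a h ->
  [/\ a + h - n%:R * h = 1, dotv (vsum E) (vsum E) = n%:R & 0 < a + h].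
Proof.
move=> n2 T; have G := @gram_tame _ _ _ _ _ T.
case: T => [[Eu _] _ H1 Ha Hh].
have key : forall i, dotv (row i E) (vsum E) = a + h - n%:R * h.
  move=> i; rewrite dotvC /vsum dotv_suml.
  under eq_bigr do rewrite dotvC G.
  rewrite sumrB -big_distrr /= sum_delta mulr1 sumr_const card_ord mulr_natl.
  by [].
have e1 : a + h - n%:R * h = 1 by rewrite -(key (Ordinal (ltnW n2))) H1.
split => //.
  rewrite {1}/vsum dotv_suml; under eq_bigr do rewrite H1.
  by rewrite sumr_const card_ord.
pose i0 : 'I_n := Ordinal (ltnW n2).
pose i1 : 'I_n := Ordinal n2.
have ne : i0 != i1 by [].
have : row i0 E - row i1 E != 0.
  apply/negP => /eqP /subr0_eq eqr.
  move: Eu; rewrite unitmxE (determinant_alternate ne) ?unitr0 // => k.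
  by have := congr1 (fun M : 'rV[R]_n => M 0 k) eqr; rewrite !mxE.
move/dotv_gt0.
have -> : dotv (row i0 E - row i1 E) (row i0 E - row i1 E) = 2 * (a + h).
  rewrite dotvDl -scaleN1r dotvZl (dotvC (row i0 E)) (dotvC (row i1 E)).
  rewrite dotvDl dotvDl !dotvZl !G eqxx (negbTE ne) eq_sym (negbTE ne).
  by rewrite eqxx /=; ring.
by rewrite pmulr_rgt0.
Qed.

Lemma row_image {R : realType} {n : nat} (E : 'M[R]_n) (a h : R) (r s : int) i :
  tame_basis E a h ->
  row i (image_basis E r s) = r%:~R *: row i E + s%:~R *: vsum E.
Proof.
case=> _ _ H1 _ _.
rewrite /image_basis /transf row_mul mulmxDr mul_mx_scalar -scalemxAr mulmxA.
congr (_ + _ *: _).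
rewrite [row i E *m _]mx11_scalar.
have -> : (row i E *m (vsum E)^T) 0 0 = 1.
  by rewrite -(H1 i) /dotv mxE; apply: eq_bigr => k _; rewrite [_^T _ _]mxE.
by rewrite mul_scalar_mx scale1r.
Qed.

Lemma gram_image {R : realType} {n : nat} (E : 'M[R]_n) (a h : R) (r s : int) i j :
  (2 <= n)%N -> tame_basis E a h ->
  dotv (row i (image_basis E r s)) (row j (image_basis E r s)) =
  (r%:~R ^+ 2 * (a + h)) * (i == j)%:R
    + (2 * r%:~R * s%:~R + s%:~R ^+ 2 * n%:R - r%:~R ^+ 2 * h).
Proof.
move=> n2 T; have G := @gram_tame _ _ _ _ _ T.
have [_ Hvv _] := tame_facts _ _ _ n2 T.
have H1 : forall k, dotv (row k E) (vsum E) = 1 by case: T.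
rewrite (row_image _ _ _ _ _ i T) (row_image _ _ _ _ _ j T).
rewrite !dotvDl !dotvZl !dotvDr !dotvZr.
rewrite (dotvC (vsum E) (row j E)) G !H1 Hvv.
ring.
Qed.

Lemma det_gram {R : realType} {n : nat} (B : 'M[R]_n) (c d : R) :
  c != 0 ->
  (forall i j, dotv (row i B) (row j B) = c * (i == j)%:R + d) ->
  \det B ^+ 2 = c ^+ n * (1 + n%:R * (d / c)).
Proof.
move=> c0 HB.
have -> : \det B ^+ 2 = \det (B *m B^T) by rewrite det_mulmx det_tr expr2.
have -> : B *m B^T = c *: (1%:M + (const_mx (d / c) : 'cV[R]_n) *m (const_mx 1 : 'rV[R]_n)).
  apply/matrixP => i j; rewrite !mxE.
  have -> : \sum_j0 B i j0 * B^T j0 j = dotv (row i B) (row j B).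
    by rewrite /dotv; apply: eq_bigr => k _; rewrite !mxE.
  rewrite HB big_ord1 !mxE mulr1 mulrDr mulrCA divff // mulr1.
  by rewrite -mulr_natr.
rewrite detZ det_rank1; congr (_ * (1 + _)).
rewrite !mxE /= (eq_bigr (fun _ => d / c)) ?sumr_const ?card_ord ?mulr_natl //.
by move=> k _; rewrite !mxE mul1r.
Qed.

Lemma quad_form {R : realType} {n : nat} (B : 'M[R]_n) (c d : R) (z : 'I_n -> R) :
  (forall i j, dotv (row i B) (row j B) = c * (i == j)%:R + d) ->
  dotv (\sum_i z i *: row i B) (\sum_i z i *: row i B) =
  c * (\sum_i z i ^+ 2) + d * (\sum_i z i) ^+ 2.
Proof.
move=> HB; rewrite dotv_sumsum.
under eq_bigr do under eq_bigr do rewrite HB mulrDr.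
under eq_bigr do rewrite big_split /=.
rewrite big_split /=; congr (_ + _).
  rewrite big_distrr /=; apply: eq_bigr => i _.
  rewrite (bigD1 i) //= eqxx big1 ?addr0; first by rewrite mulr1 expr2; ring.
  by move=> j /negbTE; rewrite eq_sym => ->; rewrite !mulr0.
rewrite expr2 big_distrl /= big_distrr /=; apply: eq_bigr => i _.
rewrite big_distrr /= big_distrr /=; apply: eq_bigr => j _; ring.
Qed.


Lemma real_min {R : realType} (N c d S K : R) :
  1 <= N -> 0 < c -> 0 <= c + (N + 1) * d -> d <= c -> 1 <= S -> K <= S -> 0 <= K ->
  K ^+ 2 <= N * S -> (K = 0 -> 2 <= S) -> (K = 0 \/ 1 <= K) -> (K <= N \/ N + 1 <= K) ->
  c + d <= c * S + d * K ^+ 2.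
Proof.
move=> N1 c0 hd1 hd2 S1 KS K0 KNS K0S [K00|K1] KN.
  have S2 := K0S K00; rewrite K00 expr2 mul0r mulr0 addr0.
  have : 0 <= c * (S - 2) by apply: mulr_ge0; lra.
  lra.
have [d0|d0] := lerP 0 d.
  have : 0 <= c * (S - 1) by apply: mulr_ge0; lra.
  have : 0 <= d * (K ^+ 2 - 1).
    apply: mulr_ge0 => //; rewrite subr_ge0 expr2; have := ler_pM ler01 ler01 K1 K1; lra.
  lra.
case: KN => [KN|KN].
  have h1 : 0 <= c * (S - K) by apply: mulr_ge0; lra.
  have h2 : 0 <= c + d * (K + 1).
    have : (N + 1) * d <= (K + 1) * d by rewrite ler_wnM2r; lra.
    lra.
  have h3 : 0 <= (K - 1) * (c + d * (K + 1)) by apply: mulr_ge0; lra.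
  have e : c * S + d * K ^+ 2 - (c + d) = c * (S - K) + (K - 1) * (c + d * (K + 1)) by ring.
  lra.
have h2 : 0 <= c + N * d.
  have : (N + 1) * d <= N * d by rewrite ler_wnM2r; lra.
  lra.
have h1 : c * K ^+ 2 <= c * N * S by rewrite -mulrA ler_pM2l.
have KK : (N + 1) ^+ 2 <= K ^+ 2 by rewrite lerXn2r // ?nnegrE; lra.
have h3 : (N + 1) ^+ 2 * (c + N * d) <= K ^+ 2 * (c + N * d) by rewrite ler_wpM2r.
have h4 : N * (c + d) <= (N + 1) ^+ 2 * (c + N * d).
  set X := (N + 1) ^+ 2 * (c + N * d) - N * (c + d).
  have e : (N + 1) * X = c * (2 * N + 1) + N ^+ 2 * (N + 2) * (c + (N + 1) * d)
    by rewrite /X; ring.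
  have : 0 <= N ^+ 2 * (N + 2) * (c + (N + 1) * d).
    by apply: mulr_ge0 => //; apply: mulr_ge0; [apply: sqr_ge0 | lra].
  have : 0 <= c * (2 * N + 1) by apply: mulr_ge0; lra.
  move=> h5 h6; have : 0 <= (N + 1) * X by rewrite e; lra.
  rewrite pmulr_rge0; last by lra.
  by rewrite /X subr_ge0.
have h5 : N * (c + d) <= N * (c * S + d * K ^+ 2).
  have : c * K ^+ 2 + N * d * K ^+ 2 <= N * (c * S + d * K ^+ 2) by lra.
  have : K ^+ 2 * (c + N * d) = c * K ^+ 2 + N * d * K ^+ 2 by ring.
  lra.
by rewrite ler_pM2l in h5; lra.
Qed.


Lemma abs_le_sq (x : int) : `|x| <= x ^+ 2.
Proof. rewrite expr2; nia. Qed.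

Lemma int_facts (n : nat) (z : 'I_n -> int) (i0 : 'I_n) : z i0 != 0 ->
  [/\ 1 <= \sum_i z i ^+ 2, `|\sum_i z i| <= \sum_i z i ^+ 2,
      (\sum_i z i) ^+ 2 <= n%:R * \sum_i z i ^+ 2 &
      (\sum_i z i = 0 -> 2 <= \sum_i z i ^+ 2)].
Proof.
move=> zi0.
have Sge : \sum_i `|z i| <= \sum_i z i ^+ 2 by apply: ler_sum => i _; apply: abs_le_sq.
split.
- rewrite (bigD1 i0) //=.
  have : 0 <= \sum_(i | i != i0) z i ^+ 2 by apply: sumr_ge0 => i _; apply: sqr_ge0.
  have : 1 <= z i0 ^+ 2 by rewrite expr2; lia.
  by move=> h1 h2; rewrite -[1]addr0; apply: lerD.
- exact: le_trans (ler_norm_sum _ _ _) Sge.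
- have e : \sum_i \sum_j (z i - z j) ^+ 2 = 2 * (n%:R * \sum_i z i ^+ 2 - (\sum_i z i) ^+ 2).
    set S := \sum_i z i ^+ 2; set k := \sum_i z i.
    rewrite (eq_bigr (fun i => n%:R * z i ^+ 2 + S - 2 * (z i * k))).
      rewrite sumrB big_split /= -!big_distrr /= sumr_const card_ord.
      rewrite -/S -/k -big_distrl /= -/k; rewrite -mulr_natl; ring.
    move=> i _.
    rewrite (eq_bigr (fun j => z i ^+ 2 + z j ^+ 2 - 2 * (z i * z j))); last by move=> j _; ring.
    rewrite sumrB big_split /= sumr_const card_ord -big_distrr /= -big_distrr /= -/S -/k.
    by rewrite [n%:R * _]mulr_natl.
  have : 0 <= \sum_i \sum_j (z i - z j) ^+ 2.
    by apply: sumr_ge0 => i _; apply: sumr_ge0 => j _; apply: sqr_ge0.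
  by rewrite e pmulr_rge0 // subr_ge0.
- move=> k0; apply: le_trans Sge.
  rewrite (bigD1 i0) //=.
  have : `|\sum_(i | i != i0) z i| <= \sum_(i | i != i0) `|z i| by apply: ler_norm_sum.
  have : \sum_(i | i != i0) z i = - z i0.
    have Hk := k0; rewrite (bigD1 i0) //= in Hk.
    by apply/eqP; rewrite -subr_eq0 opprK addrC Hk.
  move=> -> h; rewrite normrN in h.
  have : 1 <= `|z i0| by lia.
  move=> h1; apply: le_trans (lerD (lexx _) h); rewrite -mulr2n -mulr_natr.
  by rewrite mul1r mulr2n; apply: (lerD h1 h1).
Qed.


Lemma bern {R : realType} (u : R) (n : nat) : -1 <= u -> 1 + n%:R * u <= (1 + u) ^+ n.
Proof.
move=> hu; elim: n => [|n IH]; first by rewrite mul0r addr0 expr0.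
rewrite exprS.
have h1 : 0 <= 1 + u by lra.
apply: le_trans (ler_wpM2l h1 IH).
have : 0 <= n%:R * u ^+ 2 by apply: mulr_ge0 => //; apply: sqr_ge0.
rewrite -natr1; nra.
Qed.

Lemma nat_nn1 {R : realType} (n : nat) : 0 <= (n%:R : R) * (n%:R - 1).
Proof.
case: n => [|n]; first by rewrite mul0r.
by apply: mulr_ge0 => //; rewrite subr_ge0 ler1n.
Qed.

Lemma bern2 {R : realType} (t : R) (n : nat) : 0 <= t ->
  2 + 2 * n%:R * t + n%:R * (n%:R - 1) * t ^+ 2 <= 2 * (1 + t) ^+ n.
Proof.
move=> ht; elim: n => [|n IH]; first by rewrite expr0 !(mulr0, mul0r, addr0, mulr1).
rewrite [in X in _ <= X]exprS [X in _ <= X]mulrCA.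
have h1 : 0 <= 1 + t by lra.
apply: le_trans (ler_wpM2l h1 IH).
have := nat_nn1 (R:=R) n => hn.
have : 0 <= n%:R * (n%:R - 1) * t ^+ 2 * t.
  by apply: mulr_ge0 => //; apply: mulr_ge0 => //; apply: sqr_ge0.
rewrite -natr1; nra.
Qed.

Local Open Scope nat_scope.
Lemma nat_ineq (n : nat) : (2 <= n)%N -> (2 * n * (n + 1) ^ 2 <= 2 ^ n * (5 * n - 1))%N.
Proof.
move=> n2.
have base : forall k, (4 <= k)%N -> (2 * k * (k + 1) ^ 2 <= 2 ^ k * (5 * k - 1))%N.
  elim=> [//|k IH] hk.
  have [hk3|hk3] := leqP k 3.
    have -> : k = 3 by lia.
    by [].
  have := IH hk3; set p := 2 ^ k => H.
  have h1 : (2 * k.+1 * (k.+1 + 1) ^ 2 <= 2 * (2 * k * (k + 1) ^ 2))%N.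
    rewrite !expnS !expn0; nia.
  apply: leq_trans h1 _.
  rewrite [2 ^ k.+1]expnS -[X in (_ <= X)%N]mulnA leq_mul2l /=; apply: leq_trans H _.
  rewrite leq_mul2l; apply/orP; right; lia.
case: n n2 => [//|[//|[|[|n]]]] _ //.
exact: base.
Qed.

Local Open Scope ring_scope.
Lemma key_endpoint {R : realType} (n : nat) : (2 <= n)%N ->
  (n%:R + 1) ^+ 2 <= 2 ^+ n * (1 + (n%:R : R)^-1) ^+ n.
Proof.
move=> n2; set N : R := n%:R.
have N2 : 2 <= N by rewrite /N ler_nat.
have t0 : 0 <= N^-1 by rewrite invr_ge0; lra.
have B := bern2 _ n t0.
have e : 2 + 2 * N * N^-1 + N * (N - 1) * N^-1 ^+ 2 = (5 * N - 1) / (2 * N) * 2.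
  by field; lra.
rewrite -/N e in B.
have hB : (5 * N - 1) / (2 * N) <= (1 + N^-1) ^+ n.
  by rewrite -(ler_pM2r (x := 2)) // [X in _ <= X]mulrC.
have hn := nat_ineq _ n2.
have hR : 2 * N * (N + 1) ^+ 2 <= 2 ^+ n * (5 * N - 1).
  have : ((2 * n * (n + 1) ^ 2)%N%:R : R) <= (2 ^ n * (5 * n - 1))%N%:R by rewrite ler_nat.
  rewrite !natrM !natrX natrD natrB; last by lia.
  by rewrite natrM.
apply: le_trans (ler_wpM2l (exprn_ge0 _ (ler0n _ 2)) hB).
rewrite mulrA ler_pdivlMr; last by lra.
by rewrite mulrC.
Qed.

Lemma upper_poly {R : realType} (n : nat) (u : R) : (2 <= n)%N ->
  0 <= 1 + (n%:R + 1) * u -> u <= 1 ->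
  (n%:R + 1) * (1 + u) ^+ n <= 2 ^+ n * (1 + n%:R * u).
Proof.
move=> n2 hu1 hu2; set N : R := n%:R.
have N2 : 2 <= N by rewrite /N ler_nat.
set w := 1 + u.
set Q := fun x : R => (N + 1) * (\sum_(i < n) x ^+ (n.-1 - i) * 2 ^+ i) - N * 2 ^+ n.
have F : forall x : R, 2 ^+ n * (1 + N * (x - 1)) - (N + 1) * x ^+ n = (2 - x) * Q x.
  move=> x; have := subrXX x 2 n; rewrite /Q => H.
  have -> : (N + 1) * x ^+ n = (N + 1) * (x ^+ n - 2 ^+ n) + (N + 1) * 2 ^+ n by ring.
  rewrite H; ring.
set w0 := N / (N + 1).
have w0ge : w0 <= w.
  rewrite /w0 /w ler_pdivrMr; last by lra.
  nra.
have w00 : 0 <= w0 by rewrite /w0 divr_ge0 //; lra.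
have Qmono : Q w0 <= Q w.
  rewrite /Q lerD2r ler_pM2l; last by lra.
  apply: ler_sum => i _; apply: ler_wpM2r; first exact: exprn_ge0.
  by apply: lerXn2r => //; rewrite nnegrE //; lra.
have Fw0 : 0 <= 2 ^+ n * (1 + N * (w0 - 1)) - (N + 1) * w0 ^+ n.
  have K := key_endpoint (R:=R) _ n2; rewrite -/N in K.
  have e1 : 1 + N * (w0 - 1) = (N + 1)^-1 by rewrite /w0; field; lra.
  have e2 : w0 * (1 + N^-1) = 1 by rewrite /w0; field; lra.
  have e3 : w0 ^+ n * (1 + N^-1) ^+ n = 1 by rewrite -exprMn e2 expr1n.
  rewrite e1 subr_ge0.
  have hw : 0 <= w0 ^+ n by apply: exprn_ge0.
  have := ler_wpM2l hw K; rewrite [X in _ <= X]mulrCA e3 mulr1 => K2.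
  rewrite ler_pdivlMr; last by lra.
  by rewrite -mulrA (mulrC (w0 ^+ n)) mulrA -expr2 mulrC.
have Qw0 : 0 <= Q w0.
  rewrite F in Fw0; rewrite pmulr_rge0 // in Fw0.
  rewrite /w0 subr_gt0 ltr_pdivrMr; lra.
have : 0 <= (2 - w) * Q w by apply: mulr_ge0; [rewrite /w; lra | lra].
rewrite -F subr_ge0 /w (addrC 1 u) addrK.
by [].
Qed.

Lemma lambda1_gram {R : realType} {n : nat} (B : 'M[R]_n) (c d : R) :
  (2 <= n)%N -> 0 < c -> 0 <= c + (n%:R + 1) * d -> d <= c ->
  (forall i j, dotv (row i B) (row j B) = c * (i == j)%:R + d) ->
  lambda1 B = Num.sqrt (c + d).
Proof.
move=> n2 c0 hd1 hd2 HB.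
have N1 : 1 <= (n%:R : R) by rewrite ler1n; lia.
have lb : forall x, (lattice B `\ 0)%classic x -> Num.sqrt (c + d) <= norm2 x.
  move=> x [[z ->]] /= xn0.
  have [i0 zi0] : exists i0, z i0 != 0.
    case/boolP: [exists i, z i != 0] => [/existsP //|].
    rewrite negb_exists => /forallP H; exfalso; apply: xn0; rewrite big1 // => i _.
    by have := H i; rewrite negbK => /eqP ->; rewrite scale0r.
  have [S1 SK KN K2] := int_facts _ z _ zi0.
  rewrite /norm2 ler_sqrt; last exact: dotv_ge0.
  rewrite (quad_form B c d (fun i => (z i)%:~R) HB).
  set Si := \sum_i z i ^+ 2; set ki := \sum_i z i.
  have eS : \sum_i (z i)%:~R ^+ 2 = (Si%:~R : R) by rewrite /Si rmorph_sum; apply: eq_bigr => i _; rewrite rmorphXn.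
  have ek : \sum_i (z i)%:~R = (ki%:~R : R) by rewrite /ki rmorph_sum.
  rewrite eS ek.
  have eK : (ki%:~R : R) ^+ 2 = ((`|ki| : int)%:~R) ^+ 2.
    by rewrite -!rmorphXn /=; congr (_ %:~R); rewrite !expr2; nia.
  rewrite eK; apply: (real_min n%:R) => //.
  - by rewrite ler1z.
  - by rewrite ler_int.
  - by rewrite -eK -rmorphXn /= -[n%:R]/((n%:Z)%:~R) -intrM ler_int -natz.
  - move=> /eqP; rewrite intr_eq0 normr_eq0 => /eqP /K2 h.
    by rewrite -[2]/((2:int)%:~R) ler_int.
  - case: (eqVneq ki 0) => [->|kn0]; [left | right]; first by rewrite normr0.
    by rewrite ler1z; lia.
  - have [h|h] := lerP `|ki| n%:Z; [left | right].
      by rewrite -(ler_int R) in h.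
    have h2 : n%:Z + 1 <= `|ki| by lia.
    by rewrite -(ler_int R) intrD in h2.
have cd0 : 0 < c + d.
  have [d0|d0] := lerP 0 d; first by lra.
  have : n%:R * d < 0 by rewrite pmulr_rlt0 // ltr0n; lia.
  lra.
pose i0 : 'I_n := Ordinal (ltnW n2).
have mem : (lattice B `\ 0)%classic (row i0 B).
  split.
    exists (fun j => ((j == i0)%:R : int)).
    rewrite (bigD1 i0) //= big1 ?addr0.
      by rewrite (_ : (1:int)%:~R = 1 :> R) ?scale1r.
    by move=> j /negbTE ->; rewrite scale0r.
  move=> /= e0.
  have := HB i0 i0; rewrite e0 eqxx mulr1 /dotv big1 => [H|j _]; last by rewrite !mxE mul0r.
  by move: cd0; rewrite -H ltxx.
have nv : norm2 (row i0 B) = Num.sqrt (c + d) by rewrite /norm2 HB eqxx mulr1.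
rewrite /lambda1; apply/eqP; rewrite eq_le; apply/andP; split.
  rewrite -nv; apply: ge_inf; last by exists (row i0 B).
  exists (Num.sqrt (c + d)) => y [x Hx <-]; exact: lb.
apply: lb_le_inf; first by exists (norm2 (row i0 B)); exists (row i0 B).
by move=> y [x Hx <-]; exact: lb.
Qed.

Lemma sq_le {R : realType} (x y : R) : 0 <= x -> 0 <= y -> x ^+ 2 <= y ^+ 2 -> x <= y.
Proof. by move=> x0 y0; rewrite ler_pXn2r // nnegrE. Qed.

Lemma sq_eq {R : realType} (x y : R) : 0 <= x -> 0 <= y -> x ^+ 2 = y ^+ 2 -> x = y.
Proof. by move=> x0 y0 /eqP; rewrite eqrXn2 // => /eqP. Qed.

Lemma sqrt2n {R : realType} (n : nat) (K : R) : 0 < K ->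
  0 < Num.sqrt 2 ^+ n * Num.sqrt K /\
  (Num.sqrt 2 ^+ n * Num.sqrt K) ^+ 2 = 2 ^+ n * K.
Proof.
move=> K0; split.
  by apply: mulr_gt0; [apply: exprn_gt0; rewrite sqrtr_gt0 | rewrite sqrtr_gt0].
by rewrite exprMn -exprM mulnC exprM !sqr_sqrtr //; lra.
Qed.

Lemma dens_lower {R : realType} (n : nat) (P D : R) : 0 < D -> 0 <= P ->
  D ^+ 2 <= P ^+ 2 -> 1 / 2 ^+ n <= P / (2 ^+ n * D).
Proof.
move=> D0 P0 h; have := sq_le _ _ (ltW D0) P0 h => hDP.
have t0 : 0 < (2 : R) ^+ n by apply: exprn_gt0.
rewrite ler_pdivlMr ?mulr_gt0 // mul1r mulrA mulVf ?gt_eqF // mul1r.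
exact: hDP.
Qed.

Lemma dens_eq_lower {R : realType} (n : nat) (P D : R) : 0 < D -> 0 <= P ->
  D ^+ 2 = P ^+ 2 -> P / (2 ^+ n * D) = 1 / 2 ^+ n.
Proof.
move=> D0 P0 h; have := sq_eq _ _ (ltW D0) P0 h => <-.
have t0 : 0 < (2 : R) ^+ n by apply: exprn_gt0.
by field; apply/andP; split; rewrite gt_eqF.
Qed.

Lemma dens_upper {R : realType} (n : nat) (P D K : R) : 0 < D -> 0 <= P -> 0 < K ->
  P ^+ 2 * (2 ^+ n * K) <= (2 ^+ n) ^+ 2 * D ^+ 2 ->
  P / (2 ^+ n * D) <= 1 / (Num.sqrt 2 ^+ n * Num.sqrt K).
Proof.
move=> D0 P0 K0 h; have [A0 A2] := sqrt2n n K K0.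
set A := Num.sqrt 2 ^+ n * Num.sqrt K in A0 A2 *.
have t0 : 0 < (2 : R) ^+ n by apply: exprn_gt0.
rewrite ler_pdivrMr ?mulr_gt0 // mul1r ler_pdivlMl // mulrC.
apply: sq_le; [by apply: mulr_ge0; lra | by apply: mulr_ge0; lra | ].
by rewrite (exprMn _ P A) A2 exprMn.
Qed.

Lemma dens_eq_upper {R : realType} (n : nat) (P D K : R) : 0 < D -> 0 <= P -> 0 < K ->
  P ^+ 2 * (2 ^+ n * K) = (2 ^+ n) ^+ 2 * D ^+ 2 ->
  P / (2 ^+ n * D) = 1 / (Num.sqrt 2 ^+ n * Num.sqrt K).
Proof.
move=> D0 P0 K0 h; have [A0 A2] := sqrt2n n K K0.
set A := Num.sqrt 2 ^+ n * Num.sqrt K in A0 A2 *.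
have t0 : 0 < (2 : R) ^+ n by apply: exprn_gt0.
have e : P * A = 2 ^+ n * D.
  apply: sq_eq; [by apply: mulr_ge0; lra | by apply: mulr_ge0; lra | ].
  by rewrite (exprMn _ P A) A2 exprMn.
have Pn0 : P != 0.
  apply/eqP => P00; move: e; rewrite P00 mul0r => /esym /eqP.
  by rewrite mulf_eq0 !gt_eqF.
rewrite -e; field.
by rewrite Pn0 gt_eqF.
Qed.


Local Open Scope ring_scope.

Theorem mainTheorem5 (R : realType) (n : nat) (E : 'M[R]_n) (a h : R)
    (r s m : int) :
  (2 <= n)%N ->
  tame_basis E a h ->
  r != 0 -> (`|r| < n%:Z) ->
  m = r + s * n%:Z ->
  let q := (m%:~R / r%:~R) ^+ 2 : R in
  (n%:R * a - 1) / (n%:R ^+ 2 - 1) <= q <= (n%:R * a - 1) * (n%:R + 1) / (n%:R - 1) ->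
  [/\ 1 / 2 ^+ n <= center_density (image_basis E r s),
      center_density (image_basis E r s)
        <= 1 / (Num.sqrt 2 ^+ n * Num.sqrt (n%:R + 1)),
      q = (n%:R * a - 1) / (n%:R - 1) ->
        center_density (image_basis E r s) = 1 / 2 ^+ n &
      q = (n%:R * a - 1) * (n%:R + 1) / (n%:R - 1) ->
        center_density (image_basis E r s)
          = 1 / (Num.sqrt 2 ^+ n * Num.sqrt (n%:R + 1))].
Proof.
move=> n2 T r0 _ hm q /andP [hq1 hq2].
set B := image_basis E r s.
set N : R := n%:R.
have N2 : 2 <= N by rewrite /N ler_nat.
have [e1 Hvv ah0] := tame_facts _ _ _ n2 T.
set rr : R := r%:~R; set ss : R := s%:~R; set mm : R := m%:~R.
set c := rr ^+ 2 * (a + h).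
set d := 2 * rr * ss + ss ^+ 2 * N - rr ^+ 2 * h.
have HB : forall i j, dotv (row i B) (row j B) = c * (i == j)%:R + d.
  by move=> i j; rewrite (gram_image E a h r s i j n2 T).
have rr0 : rr != 0 by rewrite /rr intr_eq0.
have rr2 : 0 < rr ^+ 2 by rewrite lt_neqAle sqr_ge0 andbT eq_sym sqrf_eq0.
have c0 : 0 < c by rewrite /c mulr_gt0.
have emm : mm = rr + ss * N by rewrite /mm hm intrD intrM.
have ea : a = 1 + N * h - h by move: e1; rewrite -/N; lra.
have ecd : c + N * d = mm ^+ 2 by rewrite emm /c /d ea; ring.
have hN1 : N + 1 != 0 by rewrite gt_eqF //; lra.
have hNm1 : N - 1 != 0 by rewrite gt_eqF //; lra.
have hN2 : N ^+ 2 - 1 != 0 by rewrite gt_eqF // subr_gt0 expr2; nra.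
have eq1 : (N * a - 1) / (N ^+ 2 - 1) = (a + h) / (N + 1).
  rewrite ea; field; by rewrite ?hN1 ?hNm1 ?hN2.
have eq2 : (N * a - 1) * (N + 1) / (N - 1) = (a + h) * (N + 1).
  rewrite ea; field; by rewrite ?hN1 ?hNm1 ?hN2.
have eq3 : (N * a - 1) / (N - 1) = a + h.
  rewrite ea; field; by rewrite ?hN1 ?hNm1 ?hN2.
have eq_q : q = mm ^+ 2 / rr ^+ 2 by rewrite /q expr_div_n.
rewrite -/N eq1 eq_q in hq1; rewrite -/N eq2 eq_q in hq2.
have hlo : c <= (N + 1) * mm ^+ 2.
  rewrite ler_pdivrMr in hq1; last by lra.
  rewrite mulrAC ler_pdivlMr // in hq1.
  rewrite /c; lra.
have hhi : mm ^+ 2 <= (N + 1) * c.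
  rewrite ler_pdivrMr // in hq2.
  rewrite /c; lra.
have hd1 : 0 <= c + (N + 1) * d.
  have e : N * (c + (N + 1) * d) = (N + 1) * mm ^+ 2 - c.
    by rewrite -ecd; ring.
  have : 0 <= N * (c + (N + 1) * d) by rewrite e subr_ge0.
  by rewrite pmulr_rge0 //; lra.
have hd2 : d <= c.
  have : N * d <= N * c by lra.
  by rewrite ler_pM2l //; lra.
have L := lambda1_gram B c d n2 c0 hd1 hd2 HB.
have DB := det_gram B c d (lt0r_neq0 c0) HB.
set u := d / c.
have ecu : c + d = c * (1 + u) by rewrite /u; field; rewrite gt_eqF.
have e1u : 1 + N * u = mm ^+ 2 / c by rewrite /u -ecd; field; rewrite gt_eqF.
have mm2 : 0 < mm ^+ 2.
  have : 0 < (N + 1) * mm ^+ 2 by lra.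
  by rewrite pmulr_rgt0 //; lra.
set P := Num.sqrt (c + d) ^+ n.
set D := `|\det B|.
have cdpos : 0 <= c + d.
  have [d0|d0] := lerP 0 d; first by lra.
  have : N * d < 0 by rewrite pmulr_rlt0 //; lra.
  lra.
have P0 : 0 <= P by apply: exprn_ge0; apply: sqrtr_ge0.
have P2 : P ^+ 2 = c ^+ n * (1 + u) ^+ n.
  by rewrite /P -exprM mulnC exprM sqr_sqrtr // ecu exprMn.
have D2 : D ^+ 2 = c ^+ n * (1 + N * u).
  by rewrite /D real_normK ?num_real // DB.
have cn0 : 0 < c ^+ n by apply: exprn_gt0.
have D0 : 0 < D.
  rewrite /D normr_gt0; apply/eqP => H; move: D2.
  rewrite /D H normr0 expr0n /= e1u => /esym /eqP.
  by rewrite mulf_eq0 gt_eqF //= mulf_eq0 gt_eqF //= invr_eq0 gt_eqF.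
have dens : center_density B = P / (2 ^+ n * D).
  by rewrite /center_density /covol L.
have um1 : -1 <= u.
  rewrite /u ler_pdivlMr //; lra.
have hu1 : 0 <= 1 + (N + 1) * u.
  have : 0 <= (c + (N + 1) * d) / c by apply: divr_ge0 => //; lra.
  by rewrite mulrDl divff ?gt_eqF // -mulrA.
have hu2 : u <= 1 by rewrite /u ler_pdivrMr // mul1r.
rewrite dens; split.
- apply: dens_lower => //; rewrite D2 P2; apply: ler_wpM2l; first lra.
  exact: bern.
- apply: dens_upper => //; first by lra.
  rewrite P2 D2.
  have := upper_poly n u n2 hu1 hu2; rewrite -/N => H.
  have e : c ^+ n * (1 + u) ^+ n * (2 ^+ n * (N + 1)) = (c ^+ n * 2 ^+ n) * ((N + 1) * (1 + u) ^+ n)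
    by ring.
  have e' : (2 ^+ n) ^+ 2 * (c ^+ n * (1 + N * u)) = (c ^+ n * 2 ^+ n) * (2 ^+ n * (1 + N * u))
    by ring.
  rewrite e e'; apply: ler_wpM2l => //; apply: mulr_ge0; apply: exprn_ge0; lra.
- move=> hq; apply: dens_eq_lower => //.
  have u0 : u = 0.
    rewrite eq_q -/N eq3 in hq.
    have Hm : mm ^+ 2 = c by rewrite /c -(divfK (lt0r_neq0 rr2) (mm ^+ 2)) hq mulrC.
    have : N * u = 0 by move: e1u; rewrite Hm divff ?lt0r_neq0 //; lra.
    move/eqP; rewrite mulf_eq0 => /orP [/eqP HN|/eqP //]; lra.
  by rewrite D2 P2 u0 mulr0 addr0 expr1n.
- move=> hq; apply: dens_eq_upper => //; first by lra.
  have u1 : u = 1.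
    rewrite eq_q -/N eq2 in hq.
    have Hm : mm ^+ 2 = (N + 1) * c.
      by rewrite /c -(divfK (lt0r_neq0 rr2) (mm ^+ 2)) hq; ring.
    have : N * (u - 1) = 0 by move: e1u; rewrite Hm mulfK ?lt0r_neq0 //; lra.
    move/eqP; rewrite mulf_eq0 => /orP [/eqP HN|/eqP HU]; lra.
  rewrite D2 P2 u1 (_ : 1 + 1 = 2 :> R) // mulr1 exprMn; ring.
Qed.
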